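(* Let $G$ be a finite group and $H\leq G$. If $x\in G$ and $y\in S_x$, then $H_y=H_x$ and consequently $S_y=S_x$. As a result, for any $x,y\in G$ either $S_x=S_y$ or $S_x\cap S_y=\varnothing$.
   Context: For $x\in G$, $H_x=\bigcap_{i\in\mathbb{Z}}x^iHx^{-i}$ (the largest subgroup of $H$ normalized by $x$) and $S_x=H_x\cdot x\subseteq G$. *)

(* Defs.v *)
From mathcomp Require Import all_boot all_fingroup.
From mathcomp Require Import ssrint.
From mathcomp Require Import boolp.
Set Implicit Arguments. Unset Strict Implicit. Unset Printing Implicit Defensive.
Local Open Scope group_scope.

Definition gpowz (gT : finGroupType) (x : gT) (i : int) : gT :=
  match i with
  | Posz n => x ^+ n
  | Negz n => x ^- n.+1
  end.

Definition conjpow (gT : finGroupType) (H : {set gT}) (x : gT) (i : int) : {set gT} :=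
  [set gpowz x i * k * (gpowz x i)^-1 | k in H].

Definition Hx (gT : finGroupType) (H : {set gT}) (x : gT) : {set gT} :=
  [set h : gT | `[< forall i : int, h \in conjpow H x i >]].

Definition Sx (gT : finGroupType) (H : {set gT}) (x : gT) : {set gT} :=
  Hx H x :* x.

(* Main.v *)
Require Import Defs.
From mathcomp Require Import all_boot all_fingroup.
From mathcomp Require Import ssrint boolp.
Set Implicit Arguments. Unset Strict Implicit. Unset Printing Implicit Defensive.
Local Open Scope group_scope.

Lemma conjpowE (gT : finGroupType) (H : {set gT}) (x : gT) i :
  conjpow H x i = H :^ (gpowz x i)^-1.
Proof.
rewrite /conjpow /conjugate; apply: eq_imset => k.
by rewrite /conjg invgK mulgA.
Qed.

Lemma HxE (gT : finGroupType) (H : {group gT}) (x : gT) :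
  Hx H x = gcore H <[x]>.
Proof.
apply/setP => h; rewrite /Hx inE; apply/asboolP/bigcapP.
- move=> Hi g /cycleP [n ->].
  case: n => [|m].
  + by have := Hi 0%Z; rewrite conjpowE /= invg1 expg0.
  + by have := Hi (Negz m); rewrite conjpowE /= invgK.
- move=> Hg i; rewrite conjpowE; apply: Hg.
  by case: i => n /=; rewrite ?groupV groupX // cycle_id.
Qed.

Lemma core_eq (gT : finGroupType) (H : {group gT}) (x h : gT) :
  h \in gcore H <[x]> -> gcore H <[h * x]> = gcore H <[x]>.
Proof.
move=> hK.
have key : forall (a b : gT) , b \in gcore H <[a]> ->
    gcore H <[a]> \subset gcore H <[b * a]>.
  move=> a b bK; apply: gcore_max; first exact: gcore_sub.
  rewrite cycle_subG groupM //.
    exact: (subsetP (normG _)).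
  by rewrite -cycle_subG gcore_norm.
apply/eqP; rewrite eqEsubset key // andbT.
have -> : <[x]> = <[h^-1 * (h * x)]> by rewrite mulKg.
apply: (key).
have := key _ _ hK; move/subsetP; apply.
by rewrite groupV.
Qed.

Lemma part1 (gT : finGroupType) (H : {group gT}) (x y : gT) :
  y \in Sx H x -> Hx H y = Hx H x /\ Sx H y = Sx H x.
Proof.
rewrite /Sx !HxE => /rcosetP [h hK ->].
have E := core_eq hK; split => //.
by rewrite E rcosetM rcoset_id.
Qed.

Theorem lemma4p2 (gT : finGroupType) (G H : {group gT}) :
  H \subset G ->
  (forall x y, x \in G -> y \in Sx H x -> Hx H y = Hx H x /\ Sx H y = Sx H x) /\
  (forall x y, x \in G -> y \in G -> Sx H x = Sx H y \/ Sx H x :&: Sx H y = set0).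
Proof.
move=> _; split; first by move=> x y _; apply: part1.
move=> x y _ _.
case: (set_0Vmem (Sx H x :&: Sx H y)) => [->|[z]]; first by right.
rewrite inE => /andP [zx zy]; left.
by rewrite -(part1 zx).2 (part1 zy).2.
Qed.
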